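(* The MaBB process on $\Omega_{G,m-1}\times V$ is reversible with respect to the probability measure $\pi^{\mathrm{MaBB}}((\xi,v))\propto\pi^{\mathrm{BB}(G,s,m)}(C_{\xi,v})\,(\xi(v)+1)$. Moreover, if $s=b/a$ with $a,b$ coprime positive integers, then for every $\xi\in\Omega_{G,m-1}$ and $v\in V$, \[\pi_\xi(v):=\frac{\pi^{\mathrm{MaBB}}((\xi,v))}{\sum_{y\in V}\pi^{\mathrm{MaBB}}((\xi,y))}=\frac{a\xi(v)+b}{a(m-1)+bn}.\]
   Context: $G=(V,E,(r_e))$ finite connected, $V=\{1,\dots,n\}$, $r_e>0$; $s>0$ rational when the second statement is used; $m\ge2$; $\Omega_{G,k}=\{\xi\in\mathbb N_0^V:\sum_v\xi(v)=k\}$. $\mathrm{BB}(G,s,k)$ is the Markov chain on $\Omega_{G,k}$ with generator $\sum_e\frac{r_e}{\sum_{e'}r_{e'}}(\mathcal P_e-1)$, where an update on $e=\{v,w\}$ replaces $(\xi(v),\xi(w))$ by $(X,\xi(v)+\xi(w)-X)$, $X\sim\mathrm{BetaBin}(\xi(v)+\xi(w),s,s)$; $\mathrm P_e^{\mathrm{BB}(G,s,k)}(\xi,\xi')$ is the corresponding one-step kernel; its equilibrium is $\pi^{\mathrm{BB}(G,s,k)}(\xi)\propto\prod_v\Gamma(s+\xi(v))/\xi(v)!$. $C_{\xi,v}=\xi+\delta_v$. For $e=\{v,w\}$, $\xi,\xi'\in\Omega_{G,m-1}$ with $\mathrm P_e^{\mathrm{BB}(G,s,m-1)}(\xi,\xi')>0$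 and $x,y\in e$: $\mathrm P_{e,\xi,\xi'}(x,y)=\frac{\xi'(y)+1}{\xi(v)+\xi(w)+1}\cdot\frac{\mathrm P_e^{\mathrm{BB}(G,s,m)}(C_{\xi,x},C_{\xi',y})}{\mathrm P_e^{\mathrm{BB}(G,s,m-1)}(\xi,\xi')}$. The MaBB is the continuous-time Markov chain on $\Omega_{G,m-1}\times V$ in which each edge $e$ rings at rate $r_e/\sum_{e'}r_{e'}$; when $e$ rings in state $(\xi,y)$, the unmarked configuration moves to $\xi'$ with probability $\mathrm P_e^{\mathrm{BB}(G,s,m-1)}(\xi,\xi')$; if $y\notin e$ the mark stays, and if $y\in e$ the mark moves to $y'\in e$ with probability $\mathrm P_{e,\xi,\xi'}(y,y')$. *)

(* Defs.v *)
From HB Require Import structures.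
From mathcomp Require Import all_boot all_order all_algebra.
Set Implicit Arguments. Unset Strict Implicit. Unset Printing Implicit Defensive.
Import Order.TTheory GRing.Theory Num.Theory.
Local Open Scope ring_scope.

Definition config (n : nat) := {ffun 'I_n -> nat}.

Definition inOmega (n k : nat) (xi : config n) : bool := (\sum_i xi i == k)%N.

(* Sum of F over Omega_{G,k} (each element of Omega_{G,k} is enumerated once,
   via configurations with values in 'I_k.+1). *)
Definition sumOmega (R : realFieldType) (n k : nat) (F : config n -> R) : R :=
  \sum_(f : {ffun 'I_n -> 'I_k.+1} | (\sum_i (f i : nat) == k)%N)
     F [ffun i => (f i : nat)].

Definition addPart (n : nat) (xi : config n) (v : 'I_n) : config n :=
  [ffun i => (xi i + (i == v))%N].

(* rising factorial (s)_k = Gamma(s+k)/Gamma(s) *)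
Definition rising (R : realFieldType) (s : R) (k : nat) : R :=
  \prod_(i < k) (s + i%:R).

(* Beta-binomial pmf BetaBin(N, s, s) at j:
   C(N,j) B(j+s, N-j+s) / B(s,s) = C(N,j) (s)_j (s)_(N-j) / (2s)_N *)
Definition betaBin (R : realFieldType) (s : R) (N j : nat) : R :=
  if (j <= N)%N then
    'C(N, j)%:R * rising s j * rising s (N - j) / rising (2 * s) N
  else 0.

(* One-step kernel P_e^{BB(G,s,k)}(xi, xi') of an update on e = {v,w}:
   (xi(v), xi(w)) is replaced by (X, xi(v)+xi(w)-X), X ~ BetaBin(xi(v)+xi(w), s, s). *)
Definition PBB (R : realFieldType) (s : R) (n : nat) (v w : 'I_n)
    (xi xi' : config n) : R :=
  if [forall i, ((i != v) && (i != w)) ==> (xi' i == xi i)]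
     && (xi' v + xi' w == xi v + xi w)%N
  then betaBin s (xi v + xi w) (xi' v) else 0.

Definition Pmark (R : realFieldType) (s : R) (n : nat) (v w : 'I_n)
    (xi xi' : config n) (x y : 'I_n) : R :=
  (xi' y + 1)%:R / (xi v + xi w + 1)%:R
  * (PBB s v w (addPart xi x) (addPart xi' y) / PBB s v w xi xi').

Definition inEdge (n : nat) (v w y : 'I_n) : bool := (y == v) || (y == w).

Definition KMaBB (R : realFieldType) (s : R) (n : nat) (v w : 'I_n)
    (xi : config n) (y : 'I_n) (xi' : config n) (y' : 'I_n) : R :=
  PBB s v w xi xi' *
  (if inEdge v w y then (if inEdge v w y' then Pmark s v w xi xi' y y' else 0)
   else (y' == y)%:R).

(* Total rate sum_{e} r_e, edges e = {v,w} encoded as v < w with E v w. *)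
Definition totRate (R : realFieldType) (n : nat) (E : rel 'I_n)
    (r : 'I_n -> 'I_n -> R) : R :=
  \sum_(v : 'I_n) \sum_(w : 'I_n | (v < w)%N && E v w) r v w.

Definition genMaBB (R : realFieldType) (s : R) (n : nat) (E : rel 'I_n)
    (r : 'I_n -> 'I_n -> R)
    (xi : config n) (y : 'I_n) (xi' : config n) (y' : 'I_n) : R :=
  \sum_(v : 'I_n) \sum_(w : 'I_n | (v < w)%N && E v w)
     (r v w / totRate E r) *
     (KMaBB s v w xi y xi' y' - ((xi == xi') && (y == y'))%:R).

(* Unnormalized BB weight prod_v Gamma(s+xi(v))/xi(v)!, divided by the
   constant Gamma(s)^n (which cancels in the normalization). *)
Definition wBB (R : realFieldType) (s : R) (n : nat) (xi : config n) : R :=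
  \prod_i (rising s (xi i) / (xi i)`!%:R).

Definition piBB (R : realFieldType) (s : R) (n k : nat) (xi : config n) : R :=
  wBB s xi / sumOmega k (@wBB R s n).

Definition wMaBB (R : realFieldType) (s : R) (n m : nat)
    (xi : config n) (v : 'I_n) : R :=
  piBB s m (addPart xi v) * (xi v + 1)%:R.

Definition piMaBB (R : realFieldType) (s : R) (n m : nat)
    (xi : config n) (v : 'I_n) : R :=
  wMaBB s m xi v / sumOmega m.-1 (fun z => \sum_(y : 'I_n) wMaBB s m z y).

(* Main.v *)
Require Import Defs.
From HB Require Import structures.
From mathcomp Require Import all_boot all_order all_algebra.
From mathcomp Require Import ring lra.
Import Order.TTheory GRing.Theory Num.Theory.
Local Open Scope ring_scope.

Lemma rising_gt0 (R : realFieldType) (s : R) k : 0 < s -> 0 < rising s k.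
Proof.
move=> sp; rewrite /rising; apply: prodr_gt0 => i _.
by apply: ltr_wpDr => //; rewrite ler0n.
Qed.

Lemma risingS (R : realFieldType) (s : R) k : rising s k.+1 = rising s k * (s + k%:R).
Proof. by rewrite /rising big_ord_recr. Qed.

Lemma wBB_gt0 (R : realFieldType) (s : R) n (xi : config n) : 0 < s -> 0 < wBB s xi.
Proof.
move=> sp; rewrite /wBB; apply: prodr_gt0 => i _.
by apply: divr_gt0; [exact: rising_gt0|rewrite ltr0n fact_gt0].
Qed.

Lemma wBB_add (R : realFieldType) (s : R) n (xi : config n) y :
  wBB s (addPart xi y) * (xi y + 1)%:R = wBB s xi * (s + (xi y)%:R).
Proof.
rewrite /wBB (bigD1 y) //= (bigD1 y (P := predT)) //=.
have -> : \prod_(i | i != y) (rising s (addPart xi y i) / (addPart xi y i)`!%:R)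
   = \prod_(i | i != y) (rising s (xi i) / (xi i)`!%:R).
  by apply: eq_bigr => i /negbTE H; rewrite /addPart ffunE H addn0.
rewrite /addPart ffunE eqxx addn1 risingS factS natrM.
have h1 : ((xi y)`!%:R : R) != 0 by rewrite pnatr_eq0 -lt0n fact_gt0.
have h2 : ((xi y).+1%:R : R) != 0 by rewrite pnatr_eq0.
field; by rewrite h1 /= addrC natr1.
Qed.

Lemma sumOmega_gt0 (R : realFieldType) n k (F : config n -> R) :
  (0 < n)%N -> (forall xi, 0 < F xi) -> 0 < sumOmega k F.
Proof.
move=> np Fp; rewrite /sumOmega.
pose i0 := Ordinal np.
pose f0 : {ffun 'I_n -> 'I_k.+1} := [ffun i => if i == i0 then ord_max else ord0].
have hf0 : (\sum_i (f0 i : nat) == k)%N.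
  rewrite (bigD1 i0) //= big1 ?addn0 /f0 ?ffunE ?eqxx //.
  by move=> i /negbTE H; rewrite ffunE H.
rewrite (bigD1 f0) //=; apply: ltr_pwDl; first exact: Fp.
by apply: sumr_ge0 => f _; apply: ltW.
Qed.

Definition condBB {n} (v w : 'I_n) (xi xi' : config n) : bool :=
  [forall i, ((i != v) && (i != w)) ==> (xi' i == xi i)]
     && (xi' v + xi' w == xi v + xi w)%N.

Lemma condBB_sym{n} (v w : 'I_n) a b : condBB v w a b = condBB v w b a.
Proof.
rewrite /condBB eq_sym; congr (_ && _).
by apply/forallP/forallP => H i; apply/implyP => hi; rewrite eq_sym (implyP (H i)).
Qed.

Lemma PBB_cond (R : realFieldType) (s : R){n} (v w : 'I_n) a b :
  PBB s v w a b = if condBB v w a b then betaBin s (a v + a w) (b v) else 0.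
Proof. by []. Qed.

Lemma betaBin_gt0 (R : realFieldType) (s : R) N j : 0 < s -> (j <= N)%N ->
  0 < betaBin s N j.
Proof.
move=> sp hj; rewrite /betaBin hj.
apply: divr_gt0; last by apply: rising_gt0; rewrite mulr_gt0.
apply: mulr_gt0; [apply: mulr_gt0|exact: rising_gt0]; last exact: rising_gt0.
by rewrite ltr0n bin_gt0.
Qed.

Lemma PBB_neq0 (R : realFieldType) (s : R){n} (v w : 'I_n) a b : 0 < s ->
  condBB v w a b -> PBB s v w a b != 0.
Proof.
move=> sp c; rewrite PBB_cond c; apply: lt0r_neq0; apply: betaBin_gt0 => //.
by move: c => /andP[_ /eqP <-]; rewrite leq_addr.
Qed.

Lemma wBB_split (R : realFieldType) (s : R){n} (v w : 'I_n) (a : config n) : v != w ->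
  wBB s a = rising s (a v) / (a v)`!%:R * (rising s (a w) / (a w)`!%:R) *
     \prod_(i | (i != v) && (i != w)) (rising s (a i) / (a i)`!%:R).
Proof.
move=> vw; rewrite /wBB (bigD1 v) //= (bigD1 w) /=; last by rewrite eq_sym.
by rewrite mulrA.
Qed.

Lemma BB_rev (R : realFieldType) (s : R){n} (v w : 'I_n) a b : 0 < s -> v != w ->
  wBB s a * PBB s v w a b = wBB s b * PBB s v w b a.
Proof.
move=> sp vw; rewrite !PBB_cond -(condBB_sym v w a b).
case c: (condBB v w a b); last by rewrite !mulr0.
move: (c) => /andP[/forallP ho /eqP hs].
rewrite (wBB_split R s v w a vw) (wBB_split R s v w b vw).
have -> : \prod_(i | (i != v) && (i != w)) (rising s (b i) / (b i)`!%:R)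
        = \prod_(i | (i != v) && (i != w)) (rising s (a i) / (a i)`!%:R).
  by apply: eq_bigr => i hi; rewrite (eqP (implyP (ho i) hi)).
set P := \prod_(i | _) _.
rewrite /betaBin -hs leq_addr hs leq_addr.
rewrite -hs addKn hs addKn.
set N := (a v + a w)%N.
have hb : ('C(N, b v)%:R : R) * ((b v)`!%:R * (b w)`!%:R) = N`!%:R.
  by rewrite -natrM -natrM /N -hs -{2}(addKn (b v) (b w)) bin_fact // leq_addr.
have ha : ('C(N, a v)%:R : R) * ((a v)`!%:R * (a w)`!%:R) = N`!%:R.
  by rewrite -natrM -natrM /N -{2}(addKn (a v) (a w)) bin_fact // leq_addr.
have nz k : (k`!%:R : R) != 0 by rewrite pnatr_eq0 -lt0n fact_gt0.
have hb' : ('C(N, b v)%:R : R) = N`!%:R / ((b v)`!%:R * (b w)`!%:R).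
  by rewrite -hb mulfK // mulf_neq0.
have ha' : ('C(N, a v)%:R : R) = N`!%:R / ((a v)`!%:R * (a w)`!%:R).
  by rewrite -ha mulfK // mulf_neq0.
rewrite hb' ha'.
have hD : rising (2 * s) N != 0 by apply: lt0r_neq0; apply: rising_gt0; rewrite mulr_gt0.
field.
by rewrite hD !nz.
Qed.

Lemma K_rev (R : realFieldType) (s : R) {n} m (v w : 'I_n) xi xi' y y' :
  0 < s -> v != w -> sumOmega m (@wBB R s n) != 0 ->
  wMaBB s m xi y * KMaBB s v w xi y xi' y' = wMaBB s m xi' y' * KMaBB s v w xi' y' xi y.
Proof.
move=> sp vw Zn.
rewrite /KMaBB /wMaBB /piBB.
have cs := condBB_sym v w xi xi'.
case c: (condBB v w xi xi'); last first.
  by rewrite !PBB_cond c -cs c !mul0r !mulr0.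
move: (c) => /andP[/forallP ho /eqP hs].
have Pn := PBB_neq0 R s v w xi xi' sp c.
have Pn' : PBB s v w xi' xi != 0 by apply: PBB_neq0 => //; rewrite -cs.
case ey: (inEdge v w y); case ey': (inEdge v w y').
- rewrite /Pmark hs.
  set Zm := sumOmega m _.
  set A := wBB s (addPart xi y). set B := wBB s (addPart xi' y').
  set Q := PBB s v w (addPart xi y) (addPart xi' y').
  set Q' := PBB s v w (addPart xi' y') (addPart xi y).
  set P := PBB s v w xi xi'. set P' := PBB s v w xi' xi.
  have e : A * Q = B * Q' by apply: BB_rev.
  have Dn : ((xi v + xi w + 1)%:R : R) != 0 by rewrite pnatr_eq0 addn1.
  move: (xi v + xi w + 1)%:R Dn => D Dn.
  transitivity ((A * Q) * ((xi y + 1)%:R * (xi' y' + 1)%:R / (Zm * D))).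
    by field; rewrite Zn Dn Pn.
  by rewrite e; field; rewrite Zn Dn Pn'.
- have : y != y' by apply/negP => /eqP E; move: ey'; rewrite -E ey.
  by rewrite eq_sym => /negbTE ->; rewrite !mulr0.
- have : y != y' by apply/negP => /eqP E; move: ey'; rewrite -E ey.
  by rewrite eq_sym => /negbTE ->; rewrite !mulr0.
- case: (eqVneq y' y) => [->|nyy]; last by rewrite !mulr0.
  rewrite !mulr1.
  have hy : xi' y = xi y.
    apply/eqP; apply: (implyP (ho y)).
    by move/negbT: ey; rewrite /inEdge negb_or.
  have ha := wBB_add R s n xi y.
  have hb := wBB_add R s n xi' y. rewrite hy in hb.
  have e := BB_rev R s v w xi xi' sp vw.
  set Z := sumOmega m _.
  rewrite hy.
  transitivity ((wBB s (addPart xi y) * (xi y + 1)%:R) * PBB s v w xi xi' / Z).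
    by field; rewrite Zn.
  rewrite ha.
  transitivity ((wBB s xi * PBB s v w xi xi') * (s + (xi y)%:R) / Z).
    by field; rewrite Zn.
  rewrite e.
  transitivity ((wBB s xi' * (s + (xi y)%:R)) * PBB s v w xi' xi / Z).
    by field; rewrite Zn.
  rewrite -hb.
  by field; rewrite Zn.
Qed.

Lemma sum_ord_gt0 (R : realFieldType) n (F : 'I_n -> R) : (0 < n)%N ->
  (forall i, 0 < F i) -> 0 < \sum_i F i.
Proof.
move=> np Fp; rewrite (bigD1 (Ordinal np)) //=; apply: ltr_pwDl; first exact: Fp.
by apply: sumr_ge0 => i _; apply: ltW.
Qed.

Theorem mainTheorem5 (R : realFieldType) (n : nat) (E : rel 'I_n)
    (r : 'I_n -> 'I_n -> R) (s : R) (m : nat)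
    (n_pos : (0 < n)%N) (E_sym : symmetric E) (E_irr : irreflexive E)
    (E_conn : forall v w : 'I_n, connect E v w)
    (r_sym : forall v w, r v w = r w v)
    (r_pos : forall v w, E v w -> 0 < r v w)
    (s_pos : 0 < s) (m_ge2 : (2 <= m)%N) :
  (* pi^MaBB is a probability measure on Omega_{G,m-1} x V *)
  ((forall (xi : config n) (y : 'I_n), inOmega m.-1 xi -> 0 <= piMaBB s m xi y) /\
   sumOmega m.-1 (fun xi : config n => \sum_(y : 'I_n) piMaBB s m xi y) = 1) /\
  (* reversibility (detailed balance for the generator) *)
  (forall (xi xi' : config n) (y y' : 'I_n),
      inOmega m.-1 xi -> inOmega m.-1 xi' ->
      piMaBB s m xi y * genMaBB s E r xi y xi' y'
      = piMaBB s m xi' y' * genMaBB s E r xi' y' xi y) /\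
  (* conditional law of the mark when s = b/a *)
  (forall a b : nat, (0 < a)%N -> (0 < b)%N -> coprime a b ->
      s = b%:R / a%:R ->
      forall (xi : config n) (v : 'I_n), inOmega m.-1 xi ->
        piMaBB s m xi v / (\sum_(y : 'I_n) piMaBB s m xi y)
        = (a * xi v + b)%:R / (a * m.-1 + b * n)%:R).
Proof.
have Zmp : 0 < sumOmega m (@wBB R s n).
  by apply: sumOmega_gt0 => // xi; apply: wBB_gt0.
have wMp : forall (xi : config n) (y : 'I_n), 0 < wMaBB s m xi y.
  move=> xi y; rewrite /wMaBB /piBB; apply: mulr_gt0; last by rewrite ltr0n addn1.
  by apply: divr_gt0 => //; apply: wBB_gt0.
have Zp : 0 < sumOmega m.-1 (fun z => \sum_(y : 'I_n) wMaBB s m z y).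
  by apply: sumOmega_gt0 => // xi; apply: sum_ord_gt0.
have Zn : sumOmega m.-1 (fun z => \sum_(y : 'I_n) wMaBB s m z y) != 0 by apply: lt0r_neq0.
have Zmn : sumOmega m (@wBB R s n) != 0 by apply: lt0r_neq0.
split; [split|split].
- move=> xi y _; rewrite /piMaBB; apply: divr_ge0; first exact: ltW.
  exact: ltW.
- rewrite /piMaBB.
  set Z := sumOmega m.-1 (fun z : config n => \sum_(y0 < n) wMaBB s m z y0).
  have ZnZ : Z != 0 := Zn.
  transitivity (sumOmega m.-1 (fun z => \sum_(y : 'I_n) wMaBB s m z y) / Z).
    rewrite /sumOmega mulr_suml; apply: eq_bigr => f _.
    by rewrite mulr_suml.
  by rewrite divff.
- move=> xi xi' y y' _ _.
  rewrite /genMaBB !mulr_sumr; apply: eq_bigr => v _.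
  rewrite !mulr_sumr; apply: eq_bigr => w /andP[vw _].
  have vw' : v != w by apply: contraTneq vw => ->; rewrite ltnn.
  have Kr := K_rev R s m v w xi xi' y y' s_pos vw' Zmn.
  rewrite /piMaBB.
  set Z := sumOmega m.-1 (fun z : config n => \sum_(y0 < n) wMaBB s m z y0).
  have ZnZ : Z != 0 := Zn.
  case: (eqVneq xi xi') => [<-|nx].
    case: (eqVneq y y') => [<-|ny]; first by [].
    rewrite /= !subr0.
    move: (r v w / totRate E r) => c.
    transitivity (c * (wMaBB s m xi y * KMaBB s v w xi y xi y') / Z).
      by field; rewrite ZnZ.
    by rewrite (K_rev R s m v w xi xi y y' s_pos vw' Zmn); field; rewrite ZnZ.
  rewrite /= !subr0.
    move: (r v w / totRate E r) => c.
  transitivity (c * (wMaBB s m xi y * KMaBB s v w xi y xi' y') / Z).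
    by field; rewrite ZnZ.
  by rewrite Kr; field; rewrite ZnZ.
- move=> a b ap bp _ sab xi v hxi.
  rewrite /piMaBB -mulr_suml.
  set Z := sumOmega m.-1 (fun z : config n => \sum_(y0 < n) wMaBB s m z y0).
  have ZnZ : Z != 0 := Zn.
  pose Zm := sumOmega m (@wBB R s n).
  have hw : forall y, wMaBB s m xi y = wBB s xi * (s + (xi y)%:R) / Zm.
    by move=> y; rewrite /wMaBB /piBB mulrAC wBB_add.
  have hs : \sum_(y : 'I_n) wMaBB s m xi y = wBB s xi / Zm * (s * n%:R + (m.-1)%:R).
    rewrite -(eqP hxi) natr_sum mulr_natr -[s *+ n](congr1 (fun k => s *+ k) (card_ord n)) -sumr_const.
    rewrite -big_split /= mulr_sumr; apply: eq_bigr => y _.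
    by rewrite hw mulrAC.
  rewrite hs hw.
  have wn : wBB s xi != 0 by apply: lt0r_neq0; apply: wBB_gt0.
  have an : (a%:R : R) != 0 by rewrite pnatr_eq0 -lt0n.
  have dn : s * n%:R + (m.-1)%:R != 0.
    by apply: lt0r_neq0; apply: ltr_pwDl; [apply: mulr_gt0; rewrite ?ltr0n|rewrite ler0n].
  have dn' : ((a * m.-1 + b * n)%:R : R) != 0.
    by rewrite pnatr_eq0 -lt0n addn_gt0 orbC muln_gt0 bp n_pos.
  move: dn dn'; rewrite sab !natrD !natrM => dn dn'.
  have Zmn' : Zm != 0 := Zmn.
  field.
  by rewrite dn' ZnZ an Zmn' -sab wn.
Qed.
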